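(* Let $s=(s_1,\ldots,s_n)$ be a sequence of positive integers and let $F$ be a nonempty face of the $s$-lecture hall simplex $P_n^s$, of dimension $m$. Then $\ell^\ast(F;z)=d_m^\mu(z)$ for some sequence $\mu=(\mu_1,\ldots,\mu_m)$ of positive integers.
   Context: For a sequence $t=(t_1,\ldots,t_m)$ of positive integers, $P_m^t=\{x\in\mathbb{R}^m:0\le x_1/t_1\le\cdots\le x_m/t_m\le1\}$ (a point when $m=0$), and $d_m^t(z)=\ell^\ast(P_m^t;z)$. For a lattice $d$-simplex $\Delta=\mathrm{conv}(v^{(0)},\ldots,v^{(d)})\subset\mathbb{R}^N$, $\ell^\ast(\Delta;z)=\sum_{x\in\Pi^\circ_\Delta\cap\mathbb{Z}^{N+1}}z^{x_{N+1}}$, where $\Pi^\circ_\Delta=\{\sum_i\lambda_i(v^{(i)},1):0<\lambda_i<1\}$. *)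

(* Defs.v *)
From HB Require Import structures.
From mathcomp Require Import all_boot all_order all_algebra.
From mathcomp Require Import finmap.
From mathcomp Require Import boolp classical_sets cardinality.
From mathcomp Require Import Rstruct.
From Stdlib Require Import Rdefinitions.
Set Implicit Arguments. Unset Strict Implicit. Unset Printing Implicit Defensive.
Import Order.TTheory GRing.Theory Num.Theory.
Local Open Scope classical_set_scope.
Local Open Scope ring_scope.

Definition toR (N : nat) (v : 'rV[int]_N) : 'rV[R]_N := map_mx (fun z : int => z%:~R) v.

(* (v, 1) in R^(N+1): the last coordinate (index ord_max) is 1. *)
Definition lift1 (N : nat) (v : 'rV[R]_N) : 'rV[R]_N.+1 :=
  \row_(j < N.+1) (if unlift ord_max j is Some k then v 0 k else 1).

Definition conv (N d : nat) (v : 'I_d.+1 -> 'rV[R]_N) : set 'rV[R]_N :=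
  [set x | exists lam : 'I_d.+1 -> R,
     (forall i, 0 <= lam i) /\ \sum_i lam i = 1 /\ x = \sum_i lam i *: v i].

Definition aff_indep (N k : nat) (p : 'I_k.+1 -> 'rV[R]_N) : Prop :=
  \rank (\matrix_(i < k, j < N) (p (lift ord0 i) 0 j - p ord0 0 j)) = k.

Definition has_dim (N : nat) (S : set 'rV[R]_N) (m : nat) : Prop :=
  (exists p : 'I_m.+1 -> 'rV[R]_N, (forall i, S (p i)) /\ aff_indep p) /\
  (forall p : 'I_m.+2 -> 'rV[R]_N, (forall i, S (p i)) -> ~ aff_indep p).

(* F is a face of P (via a supporting hyperplane; a = 0, b = 0 gives P itself) *)
Definition dotv (N : nat) (a y : 'rV[R]_N) : R := \sum_(j < N) a 0 j * y 0 j.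
Definition is_face (N : nat) (P F : set 'rV[R]_N) : Prop :=
  exists (a : 'rV[R]_N) (b : R),
    (forall y, P y -> dotv a y <= b) /\ F = P `&` [set y | dotv a y = b].

Definition in_open_pp (N d : nat) (v : 'I_d.+1 -> 'rV[int]_N) (x : 'rV[R]_N.+1) : Prop :=
  exists lam : 'I_d.+1 -> R,
    (forall i, 0 < lam i < 1) /\ x = \sum_i lam i *: lift1 (toR (v i)).

(* l^*(Delta; z) = sum over lattice points x of Pi° of z^(x_(N+1)).
   The last coordinate of a point of Pi° is sum lam_i in (0, d+1), so only
   exponents 0..d occur. *)
Definition lstar_v (N d : nat) (v : 'I_d.+1 -> 'rV[int]_N) : {poly int} :=
  \poly_(k < d.+1)
    (#|` fset_set [set x : 'rV[int]_N.+1 |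
                    in_open_pp v (toR x) /\ x 0 ord_max = k%:Z] |)%:Z.

Definition lattice_simplex_with (N d : nat) (S : set 'rV[R]_N)
  (v : 'I_d.+1 -> 'rV[int]_N) : Prop :=
  aff_indep (fun i => toR (v i)) /\ S = conv (fun i => toR (v i)).

(* l^*(Delta; z) for a lattice d-simplex Delta given as a set
   (computed from any enumeration of its vertices; 0 if Delta is not one). *)
Definition lstar (N d : nat) (S : set 'rV[R]_N) : {poly int} :=
  match pselect (exists v : 'I_d.+1 -> 'rV[int]_N, lattice_simplex_with S v) with
  | left H => lstar_v (projT1 (cid H))
  | right _ => 0
  end.

Definition lecture_hall (m : nat) (t : 'I_m -> nat) : set 'rV[R]_m :=
  [set x : 'rV[R]_m | (forall j : 'I_m, 0 <= x 0 j / (t j)%:R <= 1) /\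
           (forall i j : 'I_m, leq i j -> x 0 i / (t i)%:R <= x 0 j / (t j)%:R)].

Definition dpoly (m : nat) (t : 'I_m -> nat) : {poly int} := lstar m (lecture_hall t).

(* Main.v *)
Require Import Defs.
From HB Require Import structures.
From mathcomp Require Import all_boot all_order all_algebra.
From mathcomp Require Import finmap.
From mathcomp Require Import boolp classical_sets cardinality functions.
From mathcomp Require Import Rstruct.
From mathcomp Require Import fingroup perm.
From Stdlib Require Import Rdefinitions.
Set Implicit Arguments. Unset Strict Implicit. Unset Printing Implicit Defensive.
Import Order.TTheory GRing.Theory Num.Theory.
Local Open Scope classical_set_scope.
Local Open Scope ring_scope.
Definition ai (N k : nat) (p : 'I_k.+1 -> 'rV[R]_N) : Prop :=
  forall c : 'I_k.+1 -> R, \sum_i c i = 0 -> \sum_i c i *: p i = 0 -> forall i, c i = 0.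

Lemma mulM_aff (N k : nat) (p : 'I_k.+1 -> 'rV[R]_N) (u : 'rV[R]_k) :
  u *m (\matrix_(i < k, j < N) (p (lift ord0 i) 0 j - p ord0 0 j)) =
  \sum_i u 0 i *: (p (lift ord0 i) - p ord0).
Proof.
apply/rowP => j; rewrite !mxE summxE; apply: eq_bigr => i _.
by rewrite !mxE.
Qed.

Lemma aiP (N k : nat) (p : 'I_k.+1 -> 'rV[R]_N) : aff_indep p <-> ai p.
Proof.
rewrite /aff_indep; set M := \matrix_(i < k, j < N) _; split.
- move=> H c sc0 sp0.
  have rf : row_free M by rewrite /row_free H.
  pose u := \row_(i < k) c (lift ord0 i).
  have uM : u *m M = 0.
    rewrite mulM_aff.
    under eq_bigr => i _ do rewrite mxE scalerBr.
    rewrite sumrB -scaler_suml.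
    move: sc0 sp0; rewrite !big_ord_recl => sc0 sp0.
    have -> : \sum_(i < k) c (lift ord0 i) = - c ord0.
      by apply/eqP; rewrite -addr_eq0 addrC sc0.
    have -> : \sum_(i < k) c (lift ord0 i) *: p (lift ord0 i) = - (c ord0 *: p ord0).
      by apply/eqP; rewrite -addr_eq0 addrC sp0.
    by rewrite scaleNr opprK addrC subrr.
  move/eqP: uM; rewrite (mulmx_free_eq0 _ rf) => /eqP u0.
  have cl : forall i : 'I_k, c (lift ord0 i) = 0.
    by move=> i; move/rowP: u0 => /(_ i); rewrite !mxE.
  move=> i; case: (unliftP ord0 i) => [j ->|->]; first exact: cl.
  move: sc0; rewrite big_ord_recl big1 ?addr0 //.
- move=> H; apply/eqP; change (row_free M); rewrite -kermx_eq0; apply/negPn/negP.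
  case/matrix0Pn => i [j Hij].
  pose u := row i (kermx M).
  have uM : u *m M = 0 by rewrite -row_mul mulmx_ker row0.
  pose c := fun l : 'I_k.+1 => match unlift ord0 l with
                                | Some l' => u 0 l' | None => - \sum_(l'' < k) u 0 l'' end.
  have c0 : c ord0 = - \sum_(l'' < k) u 0 l'' by rewrite /c unlift_none.
  have cS : forall l : 'I_k, c (lift ord0 l) = u 0 l by move=> l; rewrite /c liftK.
  have e1 : \sum_(l < k) c (lift ord0 l) = \sum_(l < k) u 0 l.
    by apply: eq_bigr => l _; rewrite /c liftK.
  have e2 : \sum_(l < k) c (lift ord0 l) *: p (lift ord0 l) = \sum_(l < k) u 0 l *: p (lift ord0 l).
    by apply: eq_bigr => l _; rewrite /c liftK.
  have := H c; rewrite !big_ord_recl c0 e1 e2 addNr => /(_ erefl).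
  move: uM; rewrite mulM_aff.
  under eq_bigr => l _ do rewrite scalerBr.
  rewrite sumrB -scaler_suml => /eqP; rewrite subr_eq0 => /eqP ->.
  rewrite scaleNr addNr => /(_ erefl (lift ord0 j)); rewrite /c liftK.
  by move=> uj; move: Hij; rewrite /u mxE in uj; rewrite uj eqxx.
Qed.

Lemma sum_delta (V : zmodType) (n : nat) (F : 'I_n -> V) (j : 'I_n) :
  \sum_l (if l == j then F l else 0) = F j.
Proof.
by rewrite (bigD1 j) //= eqxx big1 ?addr0 // => l /negbTE ->.
Qed.

Lemma sum_delta1 (n : nat) (j : 'I_n) : \sum_l ((l == j)%:R : R) = 1.
Proof. by rewrite (bigD1 j) //= eqxx big1 ?addr0 // => l /negbTE ->. Qed.

Lemma sum_deltaZ (N n : nat) (F : 'I_n -> 'rV[R]_N) (j : 'I_n) :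
  \sum_l ((l == j)%:R : R) *: F l = F j.
Proof.
rewrite (bigD1 j) //= eqxx scale1r big1 ?addr0 // => l /negbTE ->.
by rewrite scale0r.
Qed.

Lemma conv_delta (N d : nat) (p : 'I_d.+1 -> 'rV[R]_N) j : conv p (p j).
Proof.
exists (fun l => (l == j)%:R); split; first by move=> l; rewrite ler0n.
by rewrite sum_delta1 sum_deltaZ.
Qed.

Lemma bary_uniq (N k : nat) (p : 'I_k.+1 -> 'rV[R]_N) : ai p ->
  forall a b : 'I_k.+1 -> R, \sum_i a i = 1 -> \sum_i b i = 1 ->
  \sum_i a i *: p i = \sum_i b i *: p i -> forall i, a i = b i.
Proof.
move=> H a b sa sb e i; apply/eqP; rewrite -subr_eq0; apply/eqP.
apply: (H (fun i => a i - b i)) => //.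
  by rewrite sumrB sa sb subrr.
under eq_bigr => l _ do rewrite scalerBl.
by rewrite sumrB e subrr.
Qed.

Lemma pos_coef (I : finType) (mu : I -> R) : (forall i, 0 <= mu i) ->
  \sum_i mu i = 1 -> exists i, 0 < mu i.
Proof.
move=> ge s; case: (boolP [exists i, 0 < mu i]) => [/existsP//|/existsPn H].
have z : \sum_i mu i = 0.
  by apply: big1 => i _; apply/eqP; rewrite eq_le ge andbT leNgt H.
by move: s; rewrite z => /eqP; rewrite eq_sym oner_eq0.
Qed.

Lemma conv_vertex (N d : nat) (p q : 'I_d.+1 -> 'rV[R]_N) :
  ai q -> conv p = conv q -> forall j, exists i, q j = p i.
Proof.
move=> aq cpq j.
have : conv p (q j) by rewrite cpq; exact: conv_delta.
case=> mu [mu0 [smu qj]].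
have : forall i, exists nu : 'I_d.+1 -> R,
    (forall l, 0 <= nu l) /\ \sum_l nu l = 1 /\ p i = \sum_l nu l *: q l.
  by move=> i; have : conv q (p i) by rewrite -cpq; exact: conv_delta.
case/choice => nu Hnu.
have e : \sum_l (l == j)%:R *: q l = \sum_l (\sum_i mu i * nu i l) *: q l.
  rewrite sum_deltaZ qj.
  under eq_bigr => i _ do rewrite (proj2 (proj2 (Hnu i))) scaler_sumr.
  rewrite exchange_big /=; apply: eq_bigr => l _.
  by rewrite scaler_suml; apply: eq_bigr => i _; rewrite scalerA.
have sd := sum_delta1 j.
have sb : \sum_l (\sum_i mu i * nu i l) = 1.
  rewrite exchange_big /= -smu; apply: eq_bigr => i _.
  by rewrite -mulr_sumr (proj1 (proj2 (Hnu i))) mulr1.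
have co := bary_uniq aq sd sb e.
have [i mui] := pos_coef mu0 smu.
exists i.
have nul : forall l, l != j -> nu i l = 0.
  move=> l lj; have := co l; rewrite (negbTE lj) => /esym z.
  have ge0 : forall i', true -> 0 <= mu i' * nu i' l.
    by move=> i' _; rewrite mulr_ge0 // (proj1 (Hnu i')).
  have := @psumr_eq0P _ _ predT (fun i => mu i * nu i l) ge0 z i isT.
  move/eqP; rewrite mulf_eq0; case/orP => /eqP // m0.
  by move: mui; rewrite m0 ltxx.
have nuj : nu i j = 1.
  by rewrite -(proj1 (proj2 (Hnu i))) (bigD1 j) //= big1 ?addr0.
rewrite (proj2 (proj2 (Hnu i))) (bigD1 j) //= big1 ?addr0 ?nuj ?scale1r //.
by move=> l /nul ->; rewrite scale0r.
Qed.

Lemma toR_inj (N : nat) : injective (@toR N).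
Proof.
move=> a b e; apply/rowP => j; move/rowP: e => /(_ j); rewrite !mxE.
by move/eqP; rewrite eqr_int => /eqP.
Qed.

Lemma ai_inj (N d : nat) (q : 'I_d.+1 -> 'rV[R]_N) : ai q -> injective q.
Proof.
move=> aq j j' e; apply/eqP/negP => /negP jj.
have := aq (fun l => (l == j)%:R - (l == j')%:R).
rewrite sumrB.
rewrite !sum_delta1 subrr => /(_ erefl).
under eq_bigr => l _ do rewrite scalerBl.
rewrite sumrB.
rewrite !sum_deltaZ e subrr => /(_ erefl j); rewrite eqxx (negbTE jj) subr0.
by move/eqP; rewrite oner_eq0.
Qed.

Lemma lstar_v_perm (N d : nat) (S : set 'rV[R]_N) (v w : 'I_d.+1 -> 'rV[int]_N) :
  lattice_simplex_with S v -> lattice_simplex_with S w -> lstar_v v = lstar_v w.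
Proof.
move=> [av cv] [aw cw].
move/aiP: av => av; move/aiP: aw => aw.
have cvw : conv (fun i => toR (v i)) = conv (fun i => toR (w i)) by rewrite -cv -cw.
have ex := conv_vertex aw cvw.
have : forall j, exists i, w j = v i.
  by move=> j; have [i Hi] := ex j; exists i; apply: toR_inj.
case/choice=> sg Hsg.
have sinj : injective sg.
  move=> j j' e; apply: (ai_inj aw); by rewrite /= !Hsg e.
pose s := perm sinj.
have ws : forall j, w j = v (s j) by move=> j; rewrite permE.
have eqo : forall x, in_open_pp v x <-> in_open_pp w x.
  move=> x; split.
  - case=> lam [lam01 ->]; exists (fun i => lam (s i)); split => //.
    rewrite [LHS](reindex_inj (@perm_inj _ s)) /=.
    by apply: eq_bigr => i _; rewrite ws.
  - case=> lam [lam01 ->]; exists (fun i => lam (s^-1 i)%g); split.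
      by move=> i; apply: lam01.
    rewrite [RHS](reindex_inj (@perm_inj _ s)) /=.
    by apply: eq_bigr => i _; rewrite ws permK.
apply: eq_poly => k _; congr ((#|` fset_set _|)%:Z).
apply/seteqP; split => x /= [h1 h2]; split => //; by apply/eqo.
Qed.

Lemma lstar_eq (N d : nat) (S : set 'rV[R]_N) (v : 'I_d.+1 -> 'rV[int]_N) :
  lattice_simplex_with S v -> lstar d S = lstar_v v.
Proof.
move=> Hv; rewrite /lstar; case: pselect => [H|nH]; last first.
  by exfalso; apply: nH; exists v.
by apply: lstar_v_perm (projT2 (cid H)) Hv.
Qed.

Definition wv (N : nat) (t : 'I_N -> nat) (k : 'I_N.+1) : 'rV[int]_N :=
  \row_(j < N) (if (k <= j)%nat then (t j)%:Z else 0).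
Definition wR (N : nat) (t : 'I_N -> nat) (k : 'I_N.+1) : 'rV[R]_N := toR (wv t k).

Lemma wR_entry (N : nat) (t : 'I_N -> nat) (k : 'I_N.+1) (j : 'I_N) :
  wR t k 0 j = if (k <= j)%nat then (t j)%:R else 0.
Proof. by rewrite /wR /toR /wv !mxE; case: ifP. Qed.

Lemma comb_entry (N d : nat) (lam : 'I_d -> R) (p : 'I_d -> 'rV[R]_N) (j : 'I_N) :
  (\sum_i lam i *: p i) 0 j = \sum_i lam i * p i 0 j.
Proof. by rewrite summxE; apply: eq_bigr => i _; rewrite mxE. Qed.

Lemma lh_convex (N d : nat) (t : 'I_N -> nat) (p : 'I_d.+1 -> 'rV[R]_N) :
  (forall i, lecture_hall t (p i)) -> forall x, conv p x -> lecture_hall t x.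
Proof.
move=> Hp x [lam [l0 [ls ->]]].
have E : forall j, (\sum_i lam i *: p i) 0 j / (t j)%:R = \sum_i lam i * (p i 0 j / (t j)%:R).
  by move=> j; rewrite comb_entry mulr_suml; apply: eq_bigr => i _; rewrite mulrA.
split.
- move=> j; rewrite E; apply/andP; split.
    by apply: sumr_ge0 => i _; rewrite mulr_ge0 // (andP ((Hp i).1 j)).1.
  apply: (@le_trans _ _ (\sum_i lam i)); last by rewrite ls.
  apply: ler_sum => i _; rewrite -[X in _ <= X]mulr1 ler_wpM2l //.
  by case/andP: ((Hp i).1 j).
- move=> i j ij; rewrite !E; apply: ler_sum => l _.
  by rewrite ler_wpM2l // (Hp l).2.
Qed.

Lemma wR_in (N : nat) (t : 'I_N -> nat) (tp : forall i, (0 < t i)%nat) k :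
  lecture_hall t (wR t k).
Proof.
have E : forall j, wR t k 0 j / (t j)%:R = (k <= j)%:R.
  move=> j; rewrite wR_entry; case: ifP => _; last by rewrite mul0r.
  by rewrite divff // pnatr_eq0 -lt0n tp.
split.
- by move=> j; rewrite E; case: (k <= j)%nat; rewrite /= ?lexx ?ler01.
- move=> i j ij; rewrite !E; case: (boolP (k <= i)%nat) => ki.
    by rewrite (leq_trans ki ij).
  by rewrite ler0n.
Qed.

Lemma lh_sub_conv (N : nat) (t : 'I_N -> nat) (tp : forall i, (0 < t i)%nat) x :
  lecture_hall t x -> conv (wR t) x.
Proof.
move=> [H1 H2].
pose r := fun k : nat => match @insub _ (fun k => (k < N)%nat) 'I_N k with
  | Some j => x 0 j / (t j)%:R | None => 1 end.
have rv : forall j : 'I_N, r j = x 0 j / (t j)%:R by move=> j; rewrite /r valK.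
have ro : forall k, (N <= k)%nat -> r k = 1.
  by move=> k kN; rewrite /r insubF // ltnNge kN.
pose U := fun k : nat => if k is k'.+1 then r k' else 0.
pose lamn := fun k : nat => U k.+1 - U k.
exists (fun k : 'I_N.+1 => lamn k); split; [|split].
- move=> [k kN] /=; rewrite /lamn /U subr_ge0.
  case: k kN => [|k] kN.
    case: (ltnP 0 N) => [N0|N0]; last by rewrite ro // ler01.
    by rewrite (rv (Ordinal N0)) (andP (H1 _)).1.
  have kN' : (k < N)%nat by [].
  rewrite (rv (Ordinal kN')).
  case: (ltnP k.+1 N) => [k1|k1].
    by rewrite (rv (Ordinal k1)); apply: (H2 (Ordinal kN') (Ordinal k1)) => /=.
  by rewrite ro // (andP (H1 _)).2.
- rewrite -(big_mkord xpredT lamn) telescope_sumr //= ro //.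
  by rewrite /U subr0.
- apply/rowP => j; rewrite comb_entry.
  rewrite (eq_bigr (fun k : 'I_N.+1 => lamn k * (if (k <= j)%nat then (t j)%:R else 0))); last first.
    by move=> k _; rewrite wR_entry.
  have -> : \sum_(k < N.+1) lamn k * (if (k <= j)%nat then (t j)%:R else 0) =
            (\sum_(k < N.+1 | (k <= j)%nat) lamn k) * (t j)%:R.
    rewrite mulr_suml [RHS]big_mkcond /=; apply: eq_bigr => k _.
    by case: ifP; rewrite ?mul0r ?mulr0.
  have jN : (j.+1 <= N.+1)%nat by rewrite ltnS ltnW.
  rewrite (eq_bigl (fun k : 'I_N.+1 => true && (k < j.+1)%nat)) //.
  rewrite -(big_ord_widen_cond _ xpredT lamn jN) -(big_mkord xpredT lamn) telescope_sumr //=.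
  by rewrite subr0 rv divfK // pnatr_eq0 -lt0n tp.
Qed.

Lemma lh_conv (N : nat) (t : 'I_N -> nat) (tp : forall i, (0 < t i)%nat) :
  lecture_hall t = conv (wR t).
Proof.
apply/seteqP; split => x; first exact: lh_sub_conv.
by apply: lh_convex => k; apply: wR_in.
Qed.

Definition sincr (c N : nat) (k : 'I_c -> 'I_N) := forall i i' : 'I_c, (i < i')%nat -> (k i < k i')%nat.

Lemma sincr_le (c N : nat) (k : 'I_c -> 'I_N) : sincr k ->
  forall i i', (k i' <= k i)%nat = (i' <= i)%nat.
Proof.
move=> sk i i'; apply/idP/idP.
  by apply: contraLR; rewrite -!ltnNge => /sk.
rewrite leq_eqVlt => /orP [/eqP e|/sk /ltnW //].
by have -> : i' = i by apply: val_inj.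
Qed.

Lemma ai_sub (N c : nat) (t : 'I_N -> nat) (tp : forall i, (0 < t i)%nat)
  (k : 'I_c.+1 -> 'I_N.+1) : sincr k -> ai (fun i => wR t (k i)).
Proof.
move=> sk al sa sp.
have pre : forall i : 'I_c.+1, \sum_(i' < c.+1 | (i' <= i)%nat) al i' = 0.
  move=> i; case: (ltnP i c) => ic.
  - have i1 : (i.+1 < c.+1)%nat by [].
    have jN : (k i < N)%nat.
      have := sk i (Ordinal i1) (ltnSn _); have := ltn_ord (k (Ordinal i1)).
      by move=> a b; apply: leq_trans b _; rewrite -ltnS.
    move/rowP: sp => /(_ (Ordinal jN)); rewrite comb_entry mxE.
    under eq_bigr => l _ do rewrite wR_entry.
    have -> : \sum_(l < c.+1) al l * (if (k l <= Ordinal jN)%nat then (t (Ordinal jN))%:R else 0) =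
      (\sum_(l < c.+1 | (l <= i)%nat) al l) * (t (Ordinal jN))%:R.
      rewrite mulr_suml [RHS]big_mkcond /=; apply: eq_bigr => l _ /=.
      by rewrite (sincr_le sk); case: ifP; rewrite ?mul0r ?mulr0.
    by move/eqP; rewrite mulf_eq0 pnatr_eq0 (gtn_eqF (tp _)) orbF => /eqP.
  - rewrite -[RHS]sa; apply: eq_bigl => l.
    by rewrite -ltnS (leq_trans (ltn_ord l)) // ltnS.
have : forall n (i : 'I_c.+1), (i < n)%nat -> al i = 0.
  elim=> [//|n IH] i; rewrite ltnS leq_eqVlt => /orP [/eqP iN|]; last exact: IH.
  have := pre i; rewrite (bigD1 i) //= big1 ?addr0 //.
  move=> l /andP [li lni]; apply: IH; rewrite -iN.
  by rewrite ltn_neqAle li andbT; apply: contra lni => /eqP e; apply/eqP/val_inj.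
by move=> H i; apply: (H i.+1).
Qed.

Lemma dotv_comb (N d : nat) (a : 'rV[R]_N) (lam : 'I_d -> R) (p : 'I_d -> 'rV[R]_N) :
  dotv a (\sum_i lam i *: p i) = \sum_i lam i * dotv a (p i).
Proof.
rewrite /dotv; under eq_bigr => j _ do rewrite comb_entry mulr_sumr.
rewrite exchange_big /=; apply: eq_bigr => i _; rewrite mulr_sumr.
by apply: eq_bigr => j _; rewrite mulrCA.
Qed.

Lemma face_conv (n : nat) (s : 'I_n -> nat) (s_pos : forall i, (0 < s i)%nat)
  (F : set 'rV[R]_n) :
  is_face (lecture_hall s) F -> F !=set0 ->
  exists c (k : 'I_c.+1 -> 'I_n.+1), sincr k /\ F = conv (fun i => wR s (k i)).
Proof.
move=> [a [b [Hab ->]]] [y [Py Hy]].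
pose tight := fun k : 'I_n.+1 => dotv a (wR s k) == b.
have Z : forall z, lecture_hall s z -> dotv a z = b ->
    exists lam : 'I_n.+1 -> R, [/\ forall k, 0 <= lam k, \sum_k lam k = 1,
      z = \sum_k lam k *: wR s k & forall k, ~~ tight k -> lam k = 0].
  move=> z Pz az; have [lam [l0 [ls ze]]] := lh_sub_conv s_pos Pz.
  exists lam; split => // k ntk.
  have ge : forall k, true -> 0 <= lam k * (b - dotv a (wR s k)).
    by move=> k' _; rewrite mulr_ge0 // subr_ge0 Hab //; apply: wR_in.
  have s0 : \sum_k lam k * (b - dotv a (wR s k)) = 0.
    under eq_bigr => k' _ do rewrite mulrBr.
    by rewrite sumrB -mulr_suml ls mul1r -dotv_comb -ze az subrr.
  have := @psumr_eq0P _ _ predT _ ge s0 k isT.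
  move/eqP; rewrite mulf_eq0 subr_eq0 [b == _]eq_sym; move: ntk => /negbTE.
  by rewrite /tight => ->; rewrite orbF => /eqP.
pose es := [seq k <- index_enum 'I_n.+1 | tight k].
have [lamy [ly0 [lys yе ly]]] := Z y Py Hy.
have [k0 k0p] := pos_coef ly0 lys.
have k0t : tight k0.
  by apply/negPn/negP => /ly; move: k0p => /[swap] ->; rewrite ltxx.
have k0es : k0 \in es by rewrite mem_filter k0t mem_index_enum.
have : (0 < size es)%nat by case: (es) k0es.
case Es: (size es) => [//|c] _.
pose k := fun i : 'I_c.+1 => nth ord0 es i.
have sorted_es : sorted (fun a b : 'I_n.+1 => (a < b)%nat) es.
  apply: sorted_filter; first by move=> ? ? ?; apply: ltn_trans.
  have -> : index_enum 'I_n.+1 = enum 'I_n.+1.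
    by rewrite enumT /index_enum; case: index_enum_key.
  have := iota_ltn_sorted 0 n.+1; rewrite -val_enum_ord.
  by rewrite sorted_map.
have sk : sincr k.
  move=> i i' ii'; apply: (sorted_ltn_nth (leT := fun a b : 'I_n.+1 => (a < b)%nat)) => //.
  - by move=> ? ? ?; apply: ltn_trans.
  - by rewrite inE Es.
  - by rewrite inE Es.
have kt : forall i, tight (k i).
  move=> i; have : k i \in es by rewrite /k mem_nth // Es.
  by rewrite mem_filter => /andP [].
have sumk : forall (V : zmodType) (G : 'I_n.+1 -> V),
    \sum_(l | tight l) G l = \sum_(i < c.+1) G (k i).
  move=> V G; rewrite -big_filter -/es (big_nth ord0) Es big_mkord.
  by apply: eq_bigr.
exists c, k; split => //.
apply/seteqP; split => z.
- move=> [Pz az]; have [lam [l0 ls ze nt]] := Z z Pz az.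
  exists (fun i => lam (k i)); split; first by move=> i.
  have rest : forall (V : zmodType) (G : 'I_n.+1 -> V), (forall l, lam l = 0 -> G l = 0) ->
      \sum_l G l = \sum_(i < c.+1) G (k i).
    move=> V G HG; rewrite -sumk (bigID tight) /= [X in _ + X]big1 ?addr0 //.
    by move=> l /nt /HG.
  split.
    by rewrite -(rest _ lam) // => l.
  rewrite ze (rest _ (fun l => lam l *: wR s l)) // => l ->.
  by rewrite scale0r.
- move=> cz; split.
    by apply: (lh_convex (p := fun i => wR s (k i))) cz => i; apply: wR_in.
  case: cz => mu [m0 [ms ->]]; rewrite /= dotv_comb.
  under eq_bigr => i _ do rewrite (eqP (kt i)).
  by rewrite -mulr_suml ms mul1r.
Qed.

Lemma ai_restrict (N c m : nat) (p : 'I_c.+1 -> 'rV[R]_N) (f : 'I_m.+1 -> 'I_c.+1) :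
  injective f -> ai p -> ai (fun i => p (f i)).
Proof.
move=> fi ap g sg sgp.
pose g' := fun l : 'I_c.+1 => \sum_(i | f i == l) g i.
have part : forall (V : zmodType) (G : 'I_m.+1 -> V),
    \sum_i G i = \sum_l \sum_(i | f i == l) G i.
  by move=> V G; rewrite (partition_big f predT).
have := ap g'.
rewrite /g' -part sg => /(_ erefl).
have -> : \sum_l (\sum_(i | f i == l) g i) *: p l = \sum_i g i *: p (f i).
  rewrite (part _ (fun i => g i *: p (f i))); apply: eq_bigr => l _.
  rewrite scaler_suml; apply: eq_bigr => i /eqP <- //.
move=> /(_ sgp) H i.
have := H (f i); rewrite (big_pred1 i) // => i'.
by apply/eqP/eqP => [/fi|->].
Qed.

Lemma ker_nonzero (r c' : nat) (A : 'M[R]_(r, c')) : (c' < r)%nat ->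
  exists u : 'rV_r, u != 0 /\ u *m A = 0.
Proof.
move=> cr.
have nf : ~~ row_free A.
  rewrite /row_free; apply/negP => /eqP e.
  by have := rank_leq_col A; rewrite e leqNgt cr.
move: nf; rewrite -kermx_eq0 => /matrix0Pn [i [j Hij]].
exists (row i (kermx A)); split; last by rewrite -row_mul mulmx_ker row0.
apply/negP => /eqP/rowP/(_ j); rewrite [row _ _ 0 j]mxE [(0 : 'rV_r) 0 j]mxE => e.
by move: Hij; rewrite e eqxx.
Qed.

Lemma dim_eq (N c m : nat) (p : 'I_c.+1 -> 'rV[R]_N) :
  ai p -> has_dim (conv p) m -> c = m.
Proof.
move=> ap [[q [qin aq]] nd]; move/aiP: aq => aq.
case: (ltngtP c m) => // cm.
-
  have : forall i, exists al : 'I_c.+1 -> R,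
      (forall l, 0 <= al l) /\ \sum_l al l = 1 /\ q i = \sum_l al l *: p l.
    by move=> i; apply: qin.
  case/choice => al Hal.
  pose A := \matrix_(i < m.+1, l < c.+1) al i l.
  have [u [u0 uA]] := @ker_nonzero _ _ A (cm : (c.+1 < m.+1)%nat).
  have ue : forall l, \sum_i u 0 i * al i l = 0.
    move=> l; move/rowP: uA => /(_ l); rewrite !mxE => e; rewrite -[RHS]e.
    by apply: eq_bigr => i _; rewrite /A mxE.
  have := aq (fun i => u 0 i).
  have -> : \sum_i u 0 i = 0.
    transitivity (\sum_(l < c.+1) \sum_i u 0 i * al i l); last first.
      by apply: big1 => l _; apply: ue.
    rewrite exchange_big /=; apply: eq_bigr => i _.
    by rewrite -mulr_sumr (proj1 (proj2 (Hal i))) mulr1.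
  move=> /(_ erefl).
  have -> : \sum_i u 0 i *: q i = 0.
    under eq_bigr => i _ do rewrite (proj2 (proj2 (Hal i))) scaler_sumr.
    rewrite exchange_big /= big1 // => l _.
    under eq_bigr => i _ do rewrite scalerA.
    by rewrite -scaler_suml ue scale0r.
  move=> /(_ erefl) H; move: u0; suff -> : u = 0 by rewrite eqxx.
  by apply/rowP => i; rewrite mxE H.
-
  have le : (m.+2 <= c.+1)%nat by [].
  exfalso; apply: (nd (fun i => p (widen_ord le i))).
    by move=> i; apply: conv_delta.
  apply/aiP; apply: (ai_restrict (f := widen_ord le)) => //.
  by move=> x y /(congr1 val) /= e; apply: val_inj.
Qed.

Definition isZ (x : R) := exists z : int, x = z%:~R.
Arguments isZ x%_ring_scope.

Lemma count_prefix (P : pred nat) : (forall i i', (i' <= i)%nat -> P i -> P i') ->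
  forall L i, (i < L)%nat -> P i = (i < count P (iota 0 L))%nat.
Proof.
move=> dc; elim=> [//|L IH] i.
have -> : iota 0 L.+1 = iota 0 L ++ [:: L] by rewrite -addn1 iotaD.
rewrite count_cat /= addn0.
case PL: (P L).
- have cL : count P (iota 0 L) = L.
    rewrite -[in RHS](size_iota 0 L) -count_predT; apply: eq_in_count => x.
    rewrite mem_iota add0n => /andP [_ xL]; apply: (dc L) => //; exact: ltnW.
  have -> : (count P (iota 0 L) + true = L.+1)%nat by rewrite cL addn1.
  move=> iL; rewrite iL; apply: (dc L) => //.
- have -> : (count P (iota 0 L) + false = count P (iota 0 L))%nat by rewrite addn0.
  rewrite ltnS leq_eqVlt => /orP [/eqP ->|iL]; last exact: IH.
  rewrite PL; apply/esym/negbTE; rewrite -leqNgt.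
  by rewrite -[X in (_ <= X)%nat](size_iota 0 L) count_size.
Qed.

Definition tt (n m : nat) (k : 'I_m.+1 -> 'I_n.+1) (j : 'I_n) : nat :=
  count (fun i => (i <= m)%nat && (k (inord i) <= j)%nat) (iota 0 m.+1).

Lemma ttP (n m : nat) (k : 'I_m.+1 -> 'I_n.+1) : sincr k ->
  forall (j : 'I_n) (i : 'I_m.+1), (k i <= j)%nat = (i < tt k j)%nat.
Proof.
move=> sk j i.
have dc : forall a a', (a' <= a)%nat -> (fun i => (i <= m)%nat && (k (inord i) <= j)%nat) a ->
    (fun i => (i <= m)%nat && (k (inord i) <= j)%nat) a'.
  move=> a a' aa /= /andP [am kj]; have a'm : (a' <= m)%nat by apply: leq_trans am.
  rewrite a'm /=; apply: leq_trans kj.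
  rewrite (sincr_le sk (inord a) (inord a')) !inordK //; exact: leq_ltn_trans aa _.
have := count_prefix dc (ltn_ord i); rewrite /= -ltnS ltn_ord /= inord_val => ->.
by [].
Qed.

Lemma tt_le (n m : nat) (k : 'I_m.+1 -> 'I_n.+1) j : (tt k j <= m.+1)%nat.
Proof. by rewrite /tt -[X in (_ <= X)%nat](size_iota 0 m.+1) count_size. Qed.

Lemma tt_k (n m : nat) (k : 'I_m.+1 -> 'I_n.+1) : sincr k ->
  forall (b : 'I_m.+1) (bm : (b < m)%nat) (kn : (k b < n)%nat), tt k (Ordinal kn) = b.+1.
Proof.
move=> sk b bm kn.
have H := ttP sk (Ordinal kn).
apply/eqP; rewrite eqn_leq; apply/andP; split.
  have b1 : (b.+1 < m.+1)%nat by [].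
  have := H (Ordinal b1); rewrite /= (sincr_le sk) /= ltnn.
  by move/esym/negbT; rewrite -leqNgt.
by have := H b; rewrite /= leqnn => <-.
Qed.

Definition gg (n m : nat) (s : 'I_n -> nat) (k : 'I_m.+1 -> 'I_n.+1) (b : nat) : nat :=
  \big[gcdn/0]_(j < n | tt k j == b.+1) s j.

Definition gg' (n m : nat) (s : 'I_n -> nat) (k : 'I_m.+1 -> 'I_n.+1) (b : nat) : nat :=
  if (b < m)%nat then gg s k b else 1.

Lemma gg_dvd (n m : nat) (s : 'I_n -> nat) (k : 'I_m.+1 -> 'I_n.+1) j b :
  tt k j = b.+1 -> (gg s k b %| s j)%nat.
Proof. by move=> e; apply: (biggcdn_inf j); rewrite ?e ?eqxx. Qed.

Lemma gg'_dvd (n m : nat) (s : 'I_n -> nat) (k : 'I_m.+1 -> 'I_n.+1) j b :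
  tt k j = b.+1 -> (gg' s k b %| s j)%nat.
Proof. by rewrite /gg'; case: ifP => _; [apply: gg_dvd | rewrite dvd1n]. Qed.

Lemma kb_lt (n m : nat) (k : 'I_m.+1 -> 'I_n.+1) : sincr k ->
  forall b : 'I_m.+1, (b < m)%nat -> (k b < n)%nat.
Proof.
move=> sk b bm; have b1 : (b.+1 < m.+1)%nat by [].
have := sk b (Ordinal b1) (ltnSn _); have := ltn_ord (k (Ordinal b1)).
by move=> a c; apply: leq_trans c _; rewrite -ltnS.
Qed.

Lemma gg_pos (n m : nat) (s : 'I_n -> nat) (s_pos : forall i, (0 < s i)%nat)
  (k : 'I_m.+1 -> 'I_n.+1) : sincr k -> forall b, (b < m)%nat -> (0 < gg s k b)%nat.
Proof.
move=> sk b bm.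
have bm1 : (b < m.+1)%nat by apply: ltnW.
have kn := kb_lt sk (b := Ordinal bm1) bm.
have := gg_dvd s (tt_k sk (b := Ordinal bm1) bm kn).
rewrite lt0n; apply: contraL => /eqP ->; rewrite dvd0n -lt0n; exact: s_pos.
Qed.

Lemma gg'_pos (n m : nat) (s : 'I_n -> nat) (s_pos : forall i, (0 < s i)%nat)
  (k : 'I_m.+1 -> 'I_n.+1) : sincr k -> forall b, (0 < gg' s k b)%nat.
Proof. by move=> sk b; rewrite /gg'; case: ifP => // bm; apply: gg_pos. Qed.

Lemma isZ_gcd (I : finType) (P : pred I) (F : I -> nat) (r : R) :
  (forall i, P i -> isZ (r * (F i)%:R)) -> isZ (r * (\big[gcdn/0]_(i | P i) F i)%:R).
Proof.
move=> H; apply: (big_ind (fun g => isZ (r * g%:R))) => //.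
  by exists 0; rewrite mulr0n mulr0.
move=> x y [zx ex] [zy ey].
have [u [v e]] := Bezoutz x y.
have -> : (gcdn x y)%:R = ((gcdz x y)%:~R : R) by [].
rewrite -e intrD !intrM mulrDr mulrCA [r * (_ * _)]mulrCA.
have -> : ((x%:Z)%:~R : R) = x%:R by [].
have -> : ((y%:Z)%:~R : R) = y%:R by [].
by rewrite ex ey; exists (u * zx + v * zy); rewrite intrD !intrM.
Qed.

Lemma lift1_max (N : nat) (v : 'rV[R]_N) : lift1 v 0 ord_max = 1.
Proof. by rewrite /lift1 mxE unlift_none. Qed.

Lemma lift1_lift (N : nat) (v : 'rV[R]_N) (j : 'I_N) : lift1 v 0 (lift ord_max j) = v 0 j.
Proof. by rewrite /lift1 mxE liftK. Qed.

Lemma wv_entry (N : nat) (t : 'I_N -> nat) (k : 'I_N.+1) (j : 'I_N) :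
  toR (wv t k) 0 j = if (k <= j)%nat then (t j)%:R else 0.
Proof. exact: wR_entry. Qed.

Definition phi (n m : nat) (s : 'I_n -> nat) (k : 'I_m.+1 -> 'I_n.+1) (y : 'rV[int]_m.+1) :
  'rV[int]_n.+1 :=
  \row_(j < n.+1) match unlift ord_max j with
   | Some j' => match tt k j' with 0 => 0 | b.+1 => (s j' %/ gg' s k b)%:Z * y 0 (inord b) end
   | None => y 0 ord_max end.

Definition Lr (n m : nat) (s : 'I_n -> nat) (k : 'I_m.+1 -> 'I_n.+1) (z : 'rV[R]_m.+1) :
  'rV[R]_n.+1 :=
  \row_(j < n.+1) match unlift ord_max j with
   | Some j' => match tt k j' with 0 => 0 | b.+1 => (s j')%:R / (gg' s k b)%:R * z 0 (inord b) end
   | None => z 0 ord_max end.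

Lemma toR_phi (n m : nat) (s : 'I_n -> nat) (s_pos : forall i, (0 < s i)%nat)
  (k : 'I_m.+1 -> 'I_n.+1) (sk : sincr k) y : toR (phi s k y) = Lr s k (toR y).
Proof.
apply/rowP => j; rewrite /toR /phi /Lr !mxE.
case: (unlift ord_max j) => [j'|] //.
case E: (tt k j') => [|b] //.
rewrite intrM mxE; congr (_ * _).
have -> : (((s j' %/ gg' s k b)%:Z)%:~R : R) = (s j' %/ gg' s k b)%:R by [].
rewrite natr_div //; first exact: gg'_dvd.
by rewrite unitfE pnatr_eq0 -lt0n gg'_pos.
Qed.

Lemma phi_max (n m : nat) (s : 'I_n -> nat) (k : 'I_m.+1 -> 'I_n.+1) y :
  phi s k y 0 ord_max = y 0 ord_max.
Proof. by rewrite /phi mxE unlift_none. Qed.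

Definition muv (n m : nat) (s : 'I_n -> nat) (k : 'I_m.+1 -> 'I_n.+1) : 'I_m -> nat :=
  fun b => gg s k b.

Lemma Lr_comb (n m : nat) (s : 'I_n -> nat) (s_pos : forall i, (0 < s i)%nat)
  (k : 'I_m.+1 -> 'I_n.+1) (sk : sincr k) (lam : 'I_m.+1 -> R) :
  Lr s k (\sum_i lam i *: lift1 (toR (wv (muv s k) i))) =
  \sum_i lam i *: lift1 (toR (wv s (k i))).
Proof.
apply/rowP => j; case: (unliftP ord_max j) => [j' ->|->]; last first.
  rewrite /Lr mxE unlift_none !comb_entry.
  by apply: eq_bigr => i _; rewrite !lift1_max.
rewrite /Lr mxE liftK comb_entry.
under [RHS]eq_bigr => i _ do rewrite lift1_lift wv_entry (ttP sk).
case E: (tt k j') => [|b].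
  by rewrite big1 // => i _; rewrite ltn0 mulr0.
rewrite comb_entry mulr_sumr; apply: eq_bigr => i _.
have bm1 : (b <= m)%nat by have := tt_le k j'; rewrite E.
case bm: (b < m)%nat.
- have -> : (inord b : 'I_m.+1) = lift ord_max (Ordinal bm).
    by apply: val_inj; rewrite /= inordK // /bump leqNgt bm.
  rewrite lift1_lift wv_entry /= /gg' bm /muv /= ltnS.
  have g0 : (gg s k b)%:R != 0 :> R by rewrite pnatr_eq0 -lt0n gg_pos.
  case: ifP => _; last by rewrite !mulr0.
  by rewrite [lam i * _]mulrC mulrA divfK // mulrC.
- have bme : b = m by apply/eqP; rewrite eqn_leq bm1 leqNgt bm.
  have -> : (inord b : 'I_m.+1) = ord_max by apply: val_inj; rewrite /= inordK // bme.
  rewrite lift1_max /gg' bm divr1 mulr1 ltnS.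
  have -> : (i <= b)%nat by rewrite bme -ltnS ltn_ord.
  by rewrite mulrC.
Qed.

Lemma phi_inj (n m : nat) (s : 'I_n -> nat) (s_pos : forall i, (0 < s i)%nat)
  (k : 'I_m.+1 -> 'I_n.+1) (sk : sincr k) : injective (phi s k).
Proof.
move=> y1 y2 e; apply/rowP => b; case: (unliftP ord_max b) => [b' ->|->]; last first.
  by have := congr1 (fun x : 'rV[int]_n.+1 => x 0 ord_max) e; rewrite !phi_max.
pose bb : 'I_m.+1 := lift ord_max b'.
have bm : (bb < m)%nat by rewrite /bb lift_max ltn_ord.
have kn := kb_lt sk (b := bb) bm.
have E := tt_k sk (b := bb) bm kn.
have := congr1 (fun x : 'rV[int]_n.+1 => x 0 (lift ord_max (Ordinal kn))) e; rewrite /phi !mxE liftK E.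
rewrite inord_val => /mulfI; apply.
rewrite eqz_nat -lt0n divn_gt0; last exact: gg'_pos.
apply: dvdn_leq; [exact: s_pos | exact: gg'_dvd].
Qed.

Lemma A_eq (n m : nat) (s : 'I_n -> nat) (s_pos : forall i, (0 < s i)%nat)
  (k : 'I_m.+1 -> 'I_n.+1) (sk : sincr k) (k0 : nat) :
  [set x : 'rV[int]_n.+1 | in_open_pp (fun i => wv s (k i)) (toR x) /\ x 0 ord_max = k0%:Z] =
  phi s k @` [set y : 'rV[int]_m.+1 | in_open_pp (wv (muv s k)) (toR y) /\ y 0 ord_max = k0%:Z].
Proof.
apply/seteqP; split => x /=.
- move=> [[lam [l01 xe]] xk].
  pose yR := \sum_i lam i *: lift1 (toR (wv (muv s k) i)).
  have xe' : forall j, (x 0 j)%:~R = \sum_i lam i * lift1 (toR (wv s (k i))) 0 j.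
    by move=> j; rewrite -comb_entry -xe mxE.
  have Zy : forall b, isZ (yR 0 b).
    move=> b; case: (unliftP ord_max b) => [b' ->|->].
    + rewrite /yR comb_entry.
      under eq_bigr => i _ do rewrite lift1_lift wv_entry /muv.
      pose La := \sum_(i < m.+1 | (i <= b')%nat) lam i.
      have -> : \sum_(i < m.+1) lam i * (if (i <= b')%nat then (gg s k b')%:R else 0)
          = La * (gg s k b')%:R.
        rewrite /La mulr_suml [RHS]big_mkcond /=; apply: eq_bigr => i _.
        by case: ifP; rewrite ?mulr0 ?mul0r.
      apply: isZ_gcd => j /eqP Ej.
      exists (x 0 (lift ord_max j)); rewrite xe'.
      under eq_bigr => i _ do rewrite lift1_lift wv_entry (ttP sk) Ej ltnS.
      by rewrite /La mulr_suml [LHS]big_mkcond /=; apply: eq_bigr => i _; case: ifP; rewrite ?mulr0 ?mul0r.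
    + exists (x 0 ord_max); rewrite xe' /yR comb_entry.
      by apply: eq_bigr => i _; rewrite !lift1_max.
  have : forall b, exists z : int, yR 0 b = z%:~R by move=> b; apply: Zy.
  case/choice => f Hf.
  pose y := \row_b f b.
  have ty : toR y = yR by apply/rowP => b; rewrite !mxE Hf.
  have pe : phi s k y = x.
    apply: toR_inj; rewrite toR_phi // ty /yR Lr_comb //.
  exists y => //; split; first by exists lam; split.
  by rewrite -(phi_max s k y) pe.
- case=> y [[lam [l01 ye]] yk] <-; split; last by rewrite phi_max.
  exists lam; split => //.
  by rewrite toR_phi // ye Lr_comb.
Qed.

Lemma card_fset_set_inj (T U : choiceType) (f : T -> U) (A : set T) :
  injective f -> #|` fset_set (f @` A)| = #|` fset_set A|.
Proof.
move=> fi.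
have [fA|nfA] := pselect (finite_set A).
  by rewrite fset_set_image // card_imfset //=.
have nfB : ~ finite_set (f @` A).
  move=> fB; apply: nfA.
  have -> : A = f @^-1` (f @` A).
    apply/seteqP; split => x /=; first by exists x.
    by case=> y Ay /fi <-.
  by apply: finite_preimage => // x y _ _ /fi.
by rewrite /fset_set; case: pselect => // _; case: pselect.
Qed.

Unset Implicit Arguments.

Theorem theorem5p5 (n : nat) (s : 'I_n -> nat) (s_pos : forall i, (0 < s i)%nat)
  (F : set 'rV[R]_n) (m : nat) :
  is_face (lecture_hall s) F -> F !=set0 -> has_dim F m ->
  exists mu : 'I_m -> nat, (forall i, (0 < mu i)%nat) /\ lstar m F = dpoly mu.
Proof.
move=> Hf Hne Hd.
have [c [k [sk Fe]]] := face_conv s_pos Hf Hne.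
have aF : ai (fun i => wR s (k i)) := ai_sub s_pos sk.
have cm : c = m by apply: (dim_eq aF); rewrite -Fe.
subst c.
have mpos : forall i, (0 < muv s k i)%nat by move=> i; apply: gg_pos.
exists (muv s k); split => //.
have sid : sincr (fun i : 'I_m.+1 => i) by [].
rewrite /dpoly (@lstar_eq _ _ _ (fun i => wv s (k i))); last first.
  by split => //; apply/aiP.
rewrite (@lstar_eq _ _ _ (wv (muv s k))); last first.
  split; first by apply/aiP; apply: (ai_sub mpos sid).
  exact: lh_conv.
apply: eq_poly => k0 _.
by rewrite (A_eq s_pos sk k0) (card_fset_set_inj _ (phi_inj s_pos sk)).
Qed.
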